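(* Let $H$ be a graph and let $P_1, P_2$ be two internally vertex-disjoint paths in $H$ of the same length parity, both with endpoints $u$ and $v$, such that every internal vertex of $P_1$ and of $P_2$ has degree exactly $2$ in $H$. If $S$ is a minimum-size odd cycle transversal of $H$, then $S \cap (V(P_1) \cup V(P_2)) \subseteq \{u,v\}$.
   Context: An odd cycle transversal of $H$ is a set $S \subseteq V(H)$ such that $H - S$ is bipartite. *)

(* Defs.v *)
From mathcomp Require Import all_boot.
Set Implicit Arguments. Unset Strict Implicit. Unset Printing Implicit Defensive.

(* A (finite, simple) graph H: vertex type T : finType, adjacency e : rel T,
   assumed symmetric and irreflexive in the theorem. *)

Definition deg (T : finType) (e : rel T) (x : T) : nat := #|[set y | e x y]|.

(* A path in H with endpoints u and v, given as the vertex sequence u :: p: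
   consecutive vertices adjacent, all vertices distinct, last vertex v. *)
Definition is_path (T : finType) (e : rel T) (u v : T) (p : seq T) : bool :=
  [&& path e u p, uniq (u :: p) & last u p == v].

Definition pverts (T : finType) (u : T) (p : seq T) : {set T} := [set x in u :: p].

(* internal vertices: all vertices of u :: p except the first and the last
   (positionally) *)
Definition pinternal (T : finType) (u : T) (p : seq T) : {set T} :=
  [set x in drop 1 (belast u p)].

Definition plength (T : finType) (u : T) (p : seq T) : nat := size p.

Definition bipartite_minus (T : finType) (e : rel T) (S : {set T}) : Prop :=
  exists c : T -> bool, forall x y, x \notin S -> y \notin S -> e x y -> c x != c y.

Definition oct (T : finType) (e : rel T) (S : {set T}) : Prop := bipartite_minus e S.

Definition min_oct (T : finType) (e : rel T) (S : {set T}) : Prop :=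
  oct e S /\ forall S' : {set T}, oct e S' -> #|S| <= #|S'|.

(* Main.v *)
Require Import Defs.
From mathcomp Require Import all_boot zify.
Set Implicit Arguments. Unset Strict Implicit.

Lemma belast_take (T : eqType) (u : T) p : belast u p = take (size p) (u :: p).
Proof. by elim: p u => [|y p IH] u //=; rewrite IH. Qed.

Lemma inI (T : finType) (u : T) p x : uniq (u :: p) ->
  (x \in pinternal u p) = (x \in u :: p) && (0 < index x (u :: p) < size p).
Proof.
move=> U; rewrite /pinternal inE belast_take.
case: p U => [|y p] U.
  by rewrite /= ltn0 !andbF.
have -> : drop 1 (take (size (y :: p)) [:: u, y & p]) = take (size p) (y :: p).
  by rewrite /= drop0.
case Hx: (x \in y :: p); last first.
  have -> : (x \in take (size p) (y :: p)) = false.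
    by apply/negbTE; apply: contraFN Hx; apply: mem_take.
  rewrite inE Hx orbF.
  by case: (x =P u) => [->|_]; rewrite /= ?eqxx.
rewrite in_take //.
have ux : (u == x) = false.
  by apply/negbTE/eqP => E; move: U; rewrite /= E Hx.
by rewrite inE Hx orbT /= ux.
Qed.

Section S.
Variables (T : finType) (e : rel T) (u v : T) (p : seq T).
Hypothesis hp : is_path e u v p.

Lemma hp_path : path e u p. Proof. by case/and3P: hp. Qed.
Lemma hp_uniq : uniq (u :: p). Proof. by case/and3P: hp. Qed.
Lemma hp_last : last u p = v. Proof. by case/and3P: hp => _ _ /eqP. Qed.

Lemma v_nth : nth u (u :: p) (size p) = v.
Proof. rewrite -hp_last; exact: (nth_last u (u :: p)). Qed.

Lemma v_mem : v \in u :: p.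
Proof. by rewrite -v_nth mem_nth. Qed.

Lemma v_idx : index v (u :: p) = size p.
Proof. by rewrite -{1}v_nth index_uniq // hp_uniq. Qed.

Lemma u_idx : index u (u :: p) = 0.
Proof. by rewrite /= eqxx. Qed.

Lemma u_notI : u \notin pinternal u p.
Proof. by rewrite inI ?hp_uniq // u_idx ltnn /= andbF. Qed.

Lemma v_notI : v \notin pinternal u p.
Proof. by rewrite inI ?hp_uniq // v_idx ltnn !andbF. Qed.

Lemma vert_cases x : x \in u :: p ->
  [\/ x \in pinternal u p, x = u | x = v].
Proof.
move=> xs; have hi : index x (u :: p) < (size p).+1 by rewrite -[(size p).+1]/(size (u :: p)) index_mem.
case: (ltngtP (index x (u :: p)) (size p)) => h.
- case: (posnP (index x (u :: p))) => h0.
    apply: Or32; by rewrite -(nth_index u xs) h0.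
  by apply: Or31; rewrite inI ?hp_uniq // xs h0 h.
- lia.
- apply: Or33; by rewrite -(nth_index u xs) h v_nth.
Qed.

Lemma edge_nth i : i < size p -> e (nth u (u :: p) i) (nth u (u :: p) i.+1).
Proof. by move=> hi; have /pathP := hp_path; apply. Qed.

Hypothesis e_sym : symmetric e.
Hypothesis hdeg : forall x, x \in pinternal u p -> deg e x = 2.

Lemma nbr x y : x \in pinternal u p -> e x y ->
  y \in u :: p /\ (index y (u :: p) = (index x (u :: p)).+1 \/
                   (index y (u :: p)).+1 = index x (u :: p)).
Proof.
move=> xI exy; move: (xI); rewrite inI ?hp_uniq // => /andP[xs /andP[h0 h1]].
set i := index x (u :: p) in h0 h1 *.
set a := nth u (u :: p) i.-1; set b := nth u (u :: p) i.+1.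
have xi : nth u (u :: p) i = x by rewrite nth_index.
have ea : e x a.
  rewrite e_sym /a -xi; have := edge_nth (i := i.-1); rewrite prednK //; apply.
  lia.
have eb : e x b by rewrite /b -xi; apply: edge_nth.
have U := hp_uniq.
have hs : size (u :: p) = (size p).+1 by [].
have ab : a != b.
  rewrite /a /b nth_uniq //; first (by apply/eqP; lia); rewrite /=; lia.
have : [set a; b] == [set y | e x y].
  rewrite eqEcard; apply/andP; split.
    by apply/subsetP => z; rewrite !inE => /orP[] /eqP ->; rewrite ?ea ?eb.
  by move: (hdeg xI); rewrite /deg => ->; rewrite cards2 ab.
move/eqP/setP/(_ y); rewrite in_set2 in_set exy => /orP[] /eqP ->.
  split; first by rewrite /a mem_nth //=; lia.
  right; rewrite /a index_uniq // /=; lia.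
split; first by rewrite /b mem_nth //=; lia.
left; rewrite /b index_uniq // /=; lia.
Qed.
End S.

Lemma propagate (T : finType) (e : rel T) (u v : T) p (S : {set T}) (c : T -> bool) :
  is_path e u v p -> (forall x, x \in u :: p -> x \notin S) ->
  (forall x y, x \notin S -> y \notin S -> e x y -> c x != c y) ->
  c v = c u (+) odd (size p).
Proof.
move=> hp hS hc.
have : forall i, i <= size p -> c (nth u (u :: p) i) = c u (+) odd i.
  elim=> [|i IH] hi; first by rewrite /= addbF.
  have := hc _ _ _ _ (edge_nth hp (i := i) hi).
  rewrite IH; last lia.
  move=> H; have {}H := H (hS _ (mem_nth _ _)) (hS _ (mem_nth _ _)).
  rewrite /= in H *.
  by move: H => /(_ (ltnW hi) hi); case: (c (nth u p i)); case: (c u); case: (odd i).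
by move=> /(_ (size p) (leqnn _)); rewrite (v_nth hp).
Qed.

Definition ext_col (T : finType) (u : T) p (c : T -> bool) (b : bool) (z : T) :=
  if z \in pinternal u p then b (+) odd (index z (u :: p)) else c z.

Lemma ext (T : finType) (e : rel T) (e_sym : symmetric e) u v p
  (hp : is_path e u v p) (hdeg : forall x, x \in pinternal u p -> deg e x = 2)
  (S' J : {set T}) (c : T -> bool) (b : bool)
  (hIS : forall x, x \in pinternal u p -> x \notin S')
  (hc : forall x y, x \notin S' -> y \notin S' -> x \notin pinternal u p ->
     y \notin pinternal u p -> x \notin J -> y \notin J -> e x y -> c x != c y)
  (hu : u \notin S' -> c u = b) (hv : v \notin S' -> c v = b (+) odd (size p)) :
  forall x y, x \notin S' -> y \notin S' -> x \notin J -> y \notin J -> e x y ->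
    ext_col u p c b x != ext_col u p c b y.
Proof.
have key : forall w, w \in u :: p -> w \notin S' ->
    ext_col u p c b w = b (+) odd (index w (u :: p)).
  move=> w ws wS; rewrite /ext_col.
  case: (vert_cases hp ws) => [-> //| E | E]; subst w.
    by rewrite (negbTE (u_notI hp)) u_idx /= addbF; apply: hu.
  by rewrite (negbTE (v_notI hp)) (v_idx hp); apply: hv.
have gen : forall x y, x \in pinternal u p -> y \notin S' -> e x y ->
    ext_col u p c b x != ext_col u p c b y.
  move=> x y xI yS exy.
  have [ys hidx] := nbr hp e_sym hdeg xI exy.
  have xs : x \in u :: p by move: xI; rewrite inI ?(hp_uniq hp) // => /andP[].
  rewrite (key _ xs (hIS _ xI)) (key _ ys yS).
  by case: hidx => [->|<-]; rewrite /=; case: (b); case: (odd _).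
move=> x y xS yS xJ yJ exy.
case xI: (x \in pinternal u p); first exact: gen.
case yI: (y \in pinternal u p).
  by rewrite eq_sym; apply: gen => //; rewrite e_sym.
by rewrite /ext_col xI yI; apply: hc => //; rewrite ?xI ?yI.
Qed.

Lemma ext_col_out (T : finType) (u : T) p c b z :
  z \notin pinternal u p -> ext_col u p c b z = c z.
Proof. by rewrite /ext_col => /negbTE ->. Qed.

Lemma oct_of (T : finType) (e : rel T) (e_sym : symmetric e) (u v : T) (p1 p2 : seq T)
  (hp1 : is_path e u v p1) (hp2 : is_path e u v p2)
  (hpar : odd (size p1) = odd (size p2))
  (hdeg1 : forall x, x \in pinternal u p1 -> deg e x = 2)
  (hdeg2 : forall x, x \in pinternal u p2 -> deg e x = 2)
  (S S' : {set T}) (c : T -> bool)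
  (hc : forall x y, x \notin S -> y \notin S -> e x y -> c x != c y)
  (hsub : forall x, x \in S -> [|| x \in S', x \in pinternal u p1 | x \in pinternal u p2])
  (hI1 : forall x, x \in pinternal u p1 -> x \notin S')
  (hI2 : forall x, x \in pinternal u p2 -> x \notin S')
  (h3 : u \notin S' -> v \notin S' -> c v = c u (+) odd (size p1)) :
  oct e S'.
Proof.
have notS : forall x, x \notin S' -> x \notin pinternal u p1 -> x \notin pinternal u p2 -> x \notin S.
  move=> x h1 h2 h3'; apply/negP => /hsub; by rewrite (negbTE h1) (negbTE h2) (negbTE h3').
set b1 := if u \in S' then c v (+) odd (size p1) else c u.
set b2 := if u \in S' then c v (+) odd (size p2) else c u.
set c1 := ext_col u p1 c b1.
have c1u : c1 u = c u by rewrite /c1 ext_col_out // (u_notI hp1).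
have c1v : c1 v = c v by rewrite /c1 ext_col_out // (v_notI hp1).
have H1 := @ext T e e_sym u v p1 hp1 hdeg1 S' (pinternal u p2) c b1 hI1.
have {H1} H1 : forall x y, x \notin S' -> y \notin S' -> x \notin pinternal u p2 ->
    y \notin pinternal u p2 -> e x y -> c1 x != c1 y.
  move=> x y xS yS x2 y2 exy; apply: H1 => //.
  - by move=> x' y' xS' yS' x1 y1 x2' y2' e'; apply: hc => //; apply: notS.
  - by move=> uS; rewrite /b1 (negbTE uS).
  - move=> vS; rewrite /b1; case: ifP => uS; first by rewrite -addbA addbb addbF.
    by apply: h3 => //; rewrite uS.
exists (ext_col u p2 c1 b2).
move=> x y xS yS exy.
apply: (@ext T e e_sym u v p2 hp2 hdeg2 S' set0 c1 b2 hI2) => //; rewrite ?inE //.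
- by move=> x' y' xS' yS' x2 y2 _ _ e'; apply: H1.
- by move=> uS; rewrite /b2 (negbTE uS) c1u.
- move=> vS; rewrite /b2 c1v; case: ifP => uS; first by rewrite -addbA addbb addbF.
  by rewrite -hpar; apply: h3 => //; rewrite uS.
Qed.

Lemma arith5 (n1 n2 n3 n4 n5 : nat) : n2 <= n3.+1 -> n4 = n5.+1 -> n1 = n4.+1 -> n3 <= n5 -> n1 <= n2 -> False.
Proof. lia. Qed.

Lemma main_half (T : finType) (e : rel T)
  (e_sym : symmetric e) (u v : T) (p1 p2 : seq T)
  (hp1 : is_path e u v p1) (hp2 : is_path e u v p2)
  (hdisj : [disjoint pinternal u p1 & pinternal u p2])
  (hpar : odd (size p1) = odd (size p2))
  (hdeg1 : forall x, x \in pinternal u p1 -> deg e x = 2)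
  (hdeg2 : forall x, x \in pinternal u p2 -> deg e x = 2)
  (S : {set T}) (hS : min_oct e S) z (zS : z \in S) (zI : z \in pinternal u p2) : False.
Proof.
case: hS => [[c hc] hmin].
set S0 := S :\: (pinternal u p1 :|: pinternal u p2).
have S0z : S0 \subset S :\ z.
  apply/subsetP => x; rewrite in_setD1 in_setD in_setU => /andP[/norP[h1 h2] ->]; rewrite andbT.
  by apply/eqP => E; move: h2; rewrite E zI.
have cS : #|S| = #|S :\ z|.+1 by rewrite (cardsD1 z S) zS.
have c0 : #|S0| <= #|S :\ z| by apply: subset_leq_card.
have hI1 : forall x, x \in pinternal u p1 -> x \notin S0.
  by move=> x xI; rewrite in_setD in_setU xI.
have hI2 : forall x, x \in pinternal u p2 -> x \notin S0.
  by move=> x xI; rewrite in_setD in_setU xI orbT.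
have hsub : forall x, x \in S -> [|| x \in S0, x \in pinternal u p1 | x \in pinternal u p2].
  move=> x xS; rewrite in_setD in_setU xS andbT.
  by case: (x \in pinternal u p1); case: (x \in pinternal u p2).
have uS0 : (u \in S0) = (u \in S) by rewrite in_setD in_setU (negbTE (u_notI hp1)) (negbTE (u_notI hp2)).
have vS0 : (v \in S0) = (v \in S) by rewrite in_setD in_setU (negbTE (v_notI hp1)) (negbTE (v_notI hp2)).
case uvS: ((u \in S) || (v \in S)).
  have h3 : u \notin S0 -> v \notin S0 -> c v = c u (+) odd (size p1).
    by rewrite uS0 vS0 => /negbTE hu /negbTE hv; rewrite hu hv in uvS.
  have := hmin _ (oct_of e_sym hp1 hp2 hpar hdeg1 hdeg2 hc hsub hI1 hI2 h3).
  by move=> h; have := leq_trans h c0; rewrite cS ltnn.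
case hy: [exists y, (y \in S) && (y \in pinternal u p1)].
  case/existsP: hy => y /andP[yS yI].
  have yz : y != z by apply/eqP => E; move: (disjointFr hdisj yI); rewrite E zI.
  set S' := u |: S0.
  have hsub' : forall x, x \in S -> [|| x \in S', x \in pinternal u p1 | x \in pinternal u p2].
    move=> x /hsub /or3P[h|->|->]; rewrite ?orbT //.
    by rewrite in_setU1 h orbT.
  have hI1' : forall x, x \in pinternal u p1 -> x \notin S'.
    move=> x xI; rewrite in_setU1 negb_or hI1 // andbT.
    by apply/eqP => E; move: xI; rewrite E (negbTE (u_notI hp1)).
  have hI2' : forall x, x \in pinternal u p2 -> x \notin S'.
    move=> x xI; rewrite in_setU1 negb_or hI2 // andbT.
    by apply/eqP => E; move: xI; rewrite E (negbTE (u_notI hp2)).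
  have h3 : u \notin S' -> v \notin S' -> c v = c u (+) odd (size p1).
    by rewrite setU11.
  have := hmin _ (oct_of e_sym hp1 hp2 hpar hdeg1 hdeg2 hc hsub' hI1' hI2' h3).
  have c1 : #|S'| <= #|S0|.+1 by rewrite cardsU1; case: (u \notin S0).
  have S0y : S0 \subset (S :\ z) :\ y.
    apply/subsetP => x xS0; rewrite in_setD1 (subsetP S0z _ xS0) andbT.
    by apply/eqP => E; move: xS0; rewrite E (negbTE (hI1 _ yI)).
  have c2 : #|S :\ z| = #|(S :\ z) :\ y|.+1 by rewrite (cardsD1 y (S :\ z)) in_setD1 yz yS.
  have := subset_leq_card S0y.
  move=> hb ha; exact: (arith5 c1 c2 cS hb ha).
have h3 : u \notin S0 -> v \notin S0 -> c v = c u (+) odd (size p1).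
  move=> _ _; apply: (propagate (S := S) hp1 _ hc).
  move=> x xs; case: (vert_cases hp1 xs) => [xI|->|->].
  - apply/negP => xS; move/negbT/negP: hy; apply; apply/existsP; exists x; by rewrite xS xI.
  - by apply/negP => uS; rewrite uS in uvS.
  - by apply/negP => vS; rewrite vS orbT in uvS.
have := hmin _ (oct_of e_sym hp1 hp2 hpar hdeg1 hdeg2 hc hsub hI1 hI2 h3).
by move=> h; have := leq_trans h c0; rewrite cS ltnn.
Qed.

Theorem mainTheorem14 (T : finType) (e : rel T)
  (e_sym : symmetric e) (e_irr : irreflexive e)
  (u v : T) (p1 p2 : seq T)
  (hp1 : is_path e u v p1) (hp2 : is_path e u v p2)
  (hdisj : [disjoint pinternal u p1 & pinternal u p2])
  (hpar : odd (plength u p1) = odd (plength u p2))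
  (hdeg1 : forall x, x \in pinternal u p1 -> deg e x = 2)
  (hdeg2 : forall x, x \in pinternal u p2 -> deg e x = 2)
  (S : {set T}) (hS : min_oct e S) :
  S :&: (pverts u p1 :|: pverts u p2) \subset [set u; v].
Proof.
apply/subsetP => z; rewrite in_setI in_setU => /andP[zS zV].
rewrite in_set2.
have hpar' : odd (size p1) = odd (size p2) := hpar.
case/orP: zV; rewrite /pverts in_set => zV.
- case: (vert_cases hp1 zV) => [zI|E|E].
  + exfalso; apply: (main_half e_sym hp2 hp1 _ (esym hpar') hdeg2 hdeg1 hS zS zI).
    by rewrite disjoint_sym.
  + by rewrite E eqxx.
  + by rewrite E eqxx orbT.
- case: (vert_cases hp2 zV) => [zI|E|E].
  + exfalso; exact: (main_half e_sym hp1 hp2 hdisj hpar' hdeg1 hdeg2 hS zS zI).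
  + by rewrite E eqxx.
  + by rewrite E eqxx orbT.
Qed.
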